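(* Algorithm Drift (defined in the context) is $3$-competitive for the line chasing problem in $\mathbb{R}^2$: for every initial point $P_0\in\mathbb{R}^2$ and every finite sequence of lines $X_1,\dots,X_m$ in $\mathbb{R}^2$, the path $P_0,P_1,\dots,P_m$ produced by Drift satisfies $\sum_{t=1}^m |P_{t-1}P_t| \le 3\cdot \mathrm{OPT}$, where $\mathrm{OPT}=\min\{\sum_{t=1}^m |A_{t-1}A_t| : A_0=P_0,\ A_t\in X_t \text{ for } t=1,\dots,m\}$.
   Context: $|XY|$ denotes Euclidean distance. Line chasing problem: given an initial point $P_0\in\mathbb{R}^d$ and lines $X_1,\dots,X_m$ revealed one at a time, an online algorithm must, upon seeing $X_t$ (and not the later lines), choose $P_t\in X_t$; its cost is $\sum_{t=1}^m|P_{t-1}P_t|$. An online algorithm is $c$-competitive if its cost is at most $c$ times the optimal offline cost $\mathrm{OPT}$ on every input. Algorithm Drift (in $\mathbb{R}^2$): Let $L$ be the previous request line and $P\in L$ the algorithm's current point (for the first request, $L$ is an arbitrary fixed line through $P_0$). Let $L'$ be the new request, and for $X\in L$ let $\bar X$ denote the orthogonal projection of $X$ onto $L'$. If $L'$ does not intersect $L$ in a single point (i.e. $L'$ is parallel to or equal to $L$), move to $P'=\bar P$. Otherwise let $S=L\cap L'$, $r=|SP|$, $h=|P\bar P|$, $s=|S\bar P|$, and $x=\frac{1}{\sqrt2}(h+s-r)$; move to the point $P'\in L'$ lying on the ray from $S$ through $\bar P$ (or $P'=S$ if $\bar P=S$) with $|SP'|=s-x$. *)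

(* Defs.v *)
From Stdlib Require Import Reals Lra.
Open Scope R_scope.

Definition point : Type := (R * R)%type.

Definition dist (p q : point) : R :=
  sqrt ((fst p - fst q) ^ 2 + (snd p - snd q) ^ 2).

(* A line {(x,y) | a x + b y = c}, represented by (a, b, c) with (a,b) <> (0,0). *)
Record line : Type := mkLine { la : R; lb : R; lc : R }.

Definition valid_line (L : line) : Prop := la L <> 0 \/ lb L <> 0.

Definition on_line (X : point) (L : line) : Prop :=
  la L * fst X + lb L * snd X = lc L.

Definition proj (L : line) (X : point) : point :=
  let k := (la L * fst X + lb L * snd X - lc L) / (la L ^ 2 + lb L ^ 2) in
  (fst X - k * la L, snd X - k * lb L).

(* determinant; L and L' meet in a single point iff it is nonzero *)
Definition ldet (L L' : line) : R := la L * lb L' - la L' * lb L.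

(* the intersection point (Cramer's rule), meaningful when ldet L L' <> 0 *)
Definition inter (L L' : line) : point :=
  let D := ldet L L' in
  ((lc L * lb L' - lc L' * lb L) / D, (la L * lc L' - la L' * lc L) / D).

(* One step of Algorithm Drift: previous line L, current point P in L,
   new request L'. *)
Definition drift_step (L : line) (P : point) (L' : line) : point :=
  let Pb := proj L' P in
  if Req_EM_T (ldet L L') 0 then Pb
  else
    let S := inter L L' in
    let r := dist S P in
    let h := dist P Pb in
    let s := dist S Pb in
    let x := (h + s - r) / sqrt 2 in
    if Req_EM_T s 0 then S
    else (fst S + (s - x) / s * (fst Pb - fst S),
          snd S + (s - x) / s * (snd Pb - snd S)).

(* state of Drift after t requests: (last line, current point);
   L0 is the fixed initial line through P0, requests are X 1, X 2, ... *)
Fixpoint drift_state (L0 : line) (P0 : point) (X : nat -> line) (t : nat)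
  : line * point :=
  match t with
  | O => (L0, P0)
  | S t' => let st := drift_state L0 P0 X t' in
            (X t, drift_step (fst st) (snd st) (X t))
  end.

Definition drift_pos (L0 : line) (P0 : point) (X : nat -> line) (t : nat) : point :=
  snd (drift_state L0 P0 X t).

Fixpoint path_cost (A : nat -> point) (m : nat) : R :=
  match m with
  | O => 0
  | S m' => path_cost A m' + dist (A m') (A m)
  end.

(* Main.v *)
Require Import Defs.
From Stdlib Require Import Reals.
From Stdlib Require Import Lra Psatz Lia.
Open Scope R_scope.
Local Notation dist := Defs.dist.

Definition d2 (p q : point) : R := (fst p - fst q)^2 + (snd p - snd q)^2.

Lemma d2_nonneg p q : 0 <= d2 p q.
Proof. unfold d2; pose proof (pow2_ge_0 (fst p - fst q)); pose proof (pow2_ge_0 (snd p - snd q)); lra. Qed.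

Lemma pdist_d2 p q : dist p q = sqrt (d2 p q).
Proof. reflexivity. Qed.

Lemma pdist_nonneg p q : 0 <= dist p q.
Proof. apply sqrt_pos. Qed.

Lemma pdist_sq p q : dist p q ^ 2 = d2 p q.
Proof. rewrite pdist_d2, pow2_sqrt; [reflexivity|apply d2_nonneg]. Qed.

Lemma pdist_of_sq t p q : 0 <= t -> d2 p q = t^2 -> dist p q = t.
Proof. intros Ht H; rewrite pdist_d2, H, sqrt_pow2; auto. Qed.

Lemma le_of_sq a b : 0 <= b -> a^2 <= b^2 -> a <= b.
Proof. intros; nra. Qed.

Lemma sqrt_le_of a b : 0 <= b -> a <= b^2 -> sqrt a <= b.
Proof.
  intros Hb H. apply Rle_trans with (sqrt (b^2)).
  - apply sqrt_le_1_alt; auto.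
  - rewrite sqrt_pow2; lra.
Qed.

Lemma pdist_tri p q r : dist p r <= dist p q + dist q r.
Proof.
  apply sqrt_le_of.
  - pose proof (pdist_nonneg p q); pose proof (pdist_nonneg q r); lra.
  - assert (E : (dist p q + dist q r)^2 = d2 p q + d2 q r + 2 * (dist p q * dist q r)).
    { rewrite <- (pdist_sq p q), <- (pdist_sq q r); ring. }
    rewrite E.
    assert (M : dist p q * dist q r = sqrt (d2 p q * d2 q r)).
    { rewrite !pdist_d2, sqrt_mult_alt; auto using d2_nonneg. }
    set (dot := (fst p - fst q) * (fst q - fst r) + (snd p - snd q) * (snd q - snd r)).
    assert (Hd : dot <= dist p q * dist q r).
    { destruct (Rle_or_lt dot 0).
      - pose proof (pdist_nonneg p q); pose proof (pdist_nonneg q r); nra.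
      - apply le_of_sq.
        + pose proof (pdist_nonneg p q); pose proof (pdist_nonneg q r); nra.
        + rewrite M, pow2_sqrt.
          * unfold dot, d2.
            set (u1 := fst p - fst q); set (u2 := snd p - snd q);
            set (v1 := fst q - fst r); set (v2 := snd q - snd r).
            assert (0 <= (u1 * v2 - u2 * v1)^2) by apply pow2_ge_0.
            match goal with |- ?A <= ?B => replace B with (A + (u1 * v2 - u2 * v1)^2) by ring end.
            lra.
          * pose proof (d2_nonneg p q); pose proof (d2_nonneg q r); nra. }
    unfold d2 in *. unfold dot in Hd.
    replace ((fst p - fst r) ^ 2 + (snd p - snd r) ^ 2) with
      ((fst p - fst q) ^ 2 + (snd p - snd q) ^ 2 + ((fst q - fst r) ^ 2 + (snd q - snd r) ^ 2)
       + 2 * ((fst p - fst q) * (fst q - fst r) + (snd p - snd q) * (snd q - snd r))) by ring.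
    lra.
Qed.

Lemma sqrt2_facts : sqrt 2 ^ 2 = 2 /\ 1 <= sqrt 2.
Proof.
  rewrite pow2_sqrt by lra. split; auto.
  pose proof (sqrt_pos 2). assert (sqrt 2 ^ 2 = 2) by (rewrite pow2_sqrt; lra). nra.
Qed.

Lemma sqrt3_facts : sqrt 3 ^ 2 = 3 /\ 1 <= sqrt 3.
Proof.
  rewrite pow2_sqrt by lra. split; auto.
  pose proof (sqrt_pos 3). assert (sqrt 3 ^ 2 = 3) by (rewrite pow2_sqrt; lra). nra.
Qed.

Lemma scalar r s h x lam :
  0 <= s -> 0 <= h -> 0 <= r -> r^2 = s^2 + h^2 -> x = (h + s - r) / sqrt 2 ->
  sqrt (h^2 + x^2) + sqrt 3 * Rabs (lam * s - (s - x))
  <= sqrt 3 * Rabs (1 - lam) * r + sqrt 2 * sqrt 3 * Rabs lam * h.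
Proof.
  intros Hs Hh Hr Hrsh Hx.
  destruct sqrt2_facts as [Q2 Q2g]. destruct sqrt3_facts as [Q3 Q3g].
  set (q2 := sqrt 2) in *. set (q3 := sqrt 3) in *.
  set (y := h + s - r).
  assert (Hxy : q2 * x = y) by (rewrite Hx; unfold y; field; lra).
  assert (rs : s <= r) by nra. assert (rh : h <= r) by nra. assert (rsh : r <= s + h) by nra.
  assert (y0 : 0 <= y) by (unfold y; lra). assert (yh : y <= h) by (unfold y; lra).
  assert (ys : y <= s) by (unfold y; lra).
  assert (x0 : 0 <= x) by nra. assert (xy : x <= y) by nra.
  assert (x2 : 2 * x^2 = y^2) by (rewrite <- Hxy; rewrite <- Q2; ring).
  set (E := sqrt (h^2 + x^2)).
  assert (E0 : 0 <= E) by apply sqrt_pos.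
  assert (I2 : E <= q2 * q3 * h - q3 * x).
  { apply sqrt_le_of.
    - assert (q2 * h - x >= 0) by nra. nra.
    - replace ((q2 * q3 * h - q3 * x) ^ 2) with (q3^2 * (q2^2 * h^2 - 2 * h * (q2 * x) + x^2)) by ring.
      rewrite Q3, Q2, Hxy.
      assert (0 <= (5*h - y) * (h - y)) by nra. nra. }
  assert (I1 : E <= q3 * (r - s + x)).
  { apply sqrt_le_of.
    - nra.
    - set (d := r - s).
      assert (hd : h^2 = d * (2 * s + d)) by (unfold d; nra).
      assert (yd : y = h - d) by (unfold y, d; ring).
      assert (x6 : 6 * x = 3 * q2 * y).
      { assert (q2 * (6 * x) = q2 * (3 * q2 * y)).
        { replace (q2 * (3 * q2 * y)) with (3 * q2^2 * y) by ring. rewrite Q2, <- Hxy. ring. }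
        apply Rmult_eq_reg_l with q2; auto. lra. }
      replace ((q3 * (d + x)) ^ 2) with (3 * (d + x)^2) by (rewrite <- Q3; ring).
      assert (dh : d <= h) by (unfold d; lra). assert (d0 : 0 <= d) by (unfold d; lra).
      assert (K : 0 <= 4 * d + 6 * x - 2 * h).
      { rewrite x6, yd. nra. }
      assert (0 <= d * (4 * d + 6 * x - 2 * h)) by nra.
      nra. }
  assert (Habs : Rabs (lam * s - (s - x)) <= x * Rabs lam + (s - x) * Rabs (1 - lam)).
  { replace (lam * s - (s - x)) with (x * lam + (s - x) * (lam - 1)) by ring.
    eapply Rle_trans; [apply Rabs_triang|].
    rewrite !Rabs_mult, (Rabs_pos_eq x), (Rabs_pos_eq (s - x)) by lra.
    rewrite (Rabs_minus_sym lam 1). lra. }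
  set (a := Rabs lam) in *. set (b := Rabs (1 - lam)) in *.
  assert (ab : 1 <= a + b).
  { pose proof (Rabs_triang lam (1 - lam)) as T. fold a b in T.
    replace (lam + (1 - lam)) with 1 in T by ring. rewrite Rabs_R1 in T. exact T. }
  assert (a0 : 0 <= a) by apply Rabs_pos. assert (b0 : 0 <= b) by apply Rabs_pos.
  assert (H1 : E * a <= (q2 * q3 * h - q3 * x) * a) by (apply Rmult_le_compat_r; auto).
  assert (H2 : E * b <= (q3 * (r - s + x)) * b) by (apply Rmult_le_compat_r; auto).
  assert (H3 : E <= E * (a + b)) by nra.
  assert (H4 : q3 * Rabs (lam * s - (s - x)) <= q3 * (x * a + (s - x) * b))
    by (apply Rmult_le_compat_l; lra).
  nra.
Qed.

Lemma valid_N L : valid_line L -> 0 < la L ^ 2 + lb L ^ 2.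
Proof. intros [H|H]; nra. Qed.

Lemma proj_on L QQ : valid_line L -> on_line (proj L QQ) L.
Proof.
  intros HV. pose proof (valid_N L HV) as HN.
  destruct L as [a b c], QQ as [q1 q2]; unfold on_line, proj; simpl in *.
  field. lra.
Qed.

Lemma pyth L QQ ZZ : valid_line L -> on_line ZZ L ->
  d2 QQ ZZ = d2 QQ (proj L QQ) + d2 (proj L QQ) ZZ.
Proof.
  intros HV HZ. pose proof (valid_N L HV) as HN.
  destruct L as [a b c], QQ as [q1 q2], ZZ as [z1 z2]; unfold on_line, proj, d2 in *; simpl in *.
  rewrite <- HZ. field. lra.
Qed.

Lemma inter_on L L' : ldet L L' <> 0 -> on_line (inter L L') L /\ on_line (inter L L') L'.
Proof.
  intros HD. destruct L as [a b c], L' as [a' b' c']; unfold on_line, inter, ldet in *; simpl in *.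
  split; field; auto.
Qed.

Lemma lam_repr L S P A : valid_line L -> on_line S L -> on_line P L -> on_line A L ->
  d2 P S <> 0 ->
  exists lam, fst A = fst S + lam * (fst P - fst S) /\ snd A = snd S + lam * (snd P - snd S).
Proof.
  intros HV HS HP HA HD.
  destruct L as [a b c], S as [s1 s2], P as [p1 p2], A as [x1 x2];
    unfold on_line, d2, valid_line in *; simpl in *.
  set (v1 := p1 - s1); set (v2 := p2 - s2); set (w1 := x1 - s1); set (w2 := x2 - s2).
  assert (Ev : a * v1 + b * v2 = 0) by (unfold v1, v2; lra).
  assert (Ew : a * w1 + b * w2 = 0) by (unfold w1, w2; lra).
  assert (Cr : v1 * w2 - v2 * w1 = 0).
  { destruct HV as [Ha|Hb].
    - assert (a * (v1 * w2 - v2 * w1) = 0).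
      { replace (a * (v1 * w2 - v2 * w1)) with (w2 * (a * v1 + b * v2) - v2 * (a * w1 + b * w2)) by ring.
        rewrite Ev, Ew; ring. }
      destruct (Rmult_integral _ _ H); [contradiction|auto].
    - assert (b * (v1 * w2 - v2 * w1) = 0).
      { replace (b * (v1 * w2 - v2 * w1)) with (v1 * (a * w1 + b * w2) - w1 * (a * v1 + b * v2)) by ring.
        rewrite Ev, Ew; ring. }
      destruct (Rmult_integral _ _ H); [contradiction|auto]. }
  fold v1 v2 in HD.
  exists ((w1 * v1 + w2 * v2) / (v1 ^ 2 + v2 ^ 2)). split.
  - replace x1 with (s1 + w1) by (unfold w1; ring). fold v1.
    apply Rplus_eq_compat_l.
    apply Rmult_eq_reg_r with (v1 ^ 2 + v2 ^ 2); auto.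
    field_simplify; auto.
    replace (w1 * v1 ^ 2 + w1 * v2 ^ 2) with (w1 * v1 ^ 2 + v2 * (v2 * w1)) by ring.
    replace (v2 * w1) with (v1 * w2) by lra. ring.
  - replace x2 with (s2 + w2) by (unfold w2; ring). fold v2.
    apply Rplus_eq_compat_l.
    apply Rmult_eq_reg_r with (v1 ^ 2 + v2 ^ 2); auto.
    field_simplify; auto.
    replace (w2 * v1 ^ 2 + w2 * v2 ^ 2) with (v1 * (v1 * w2) + w2 * v2 ^ 2) by ring.
    replace (v1 * w2) with (v2 * w1) by lra. ring.
Qed.

Lemma red L' P P' A A' : valid_line L' -> on_line A' L' ->
  dist P P' + sqrt 3 * dist P' (proj L' A) <= sqrt 3 * dist P A + sqrt 2 * sqrt 3 * dist A (proj L' A) ->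
  dist P P' + sqrt 3 * dist P' A' <= sqrt 3 * dist P A + 3 * dist A A'.
Proof.
  intros HV HA' H.
  set (Ab := proj L' A) in *.
  pose proof (pdist_tri P' Ab A') as T.
  set (k := dist A Ab) in *. set (u := dist Ab A') in *.
  assert (k0 : 0 <= k) by apply pdist_nonneg. assert (u0 : 0 <= u) by apply pdist_nonneg.
  assert (D : dist A A' ^ 2 = k ^ 2 + u ^ 2).
  { rewrite !pdist_sq. unfold k, u. rewrite !pdist_sq. apply pyth; auto. }
  destruct sqrt2_facts as [Q2 Q2g]. destruct sqrt3_facts as [Q3 Q3g].
  set (q2 := sqrt 2) in *. set (q3 := sqrt 3) in *.
  assert (W : q3 * u + q2 * q3 * k <= 3 * dist A A').
  { apply le_of_sq.
    - pose proof (pdist_nonneg A A'); lra.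
    - replace ((3 * dist A A') ^ 2) with (9 * dist A A' ^ 2) by ring. rewrite D.
      replace ((q3 * u + q2 * q3 * k) ^ 2) with (q3^2 * u^2 + 2 * q2 * q3^2 * u * k + q2^2 * q3^2 * k^2) by ring.
      rewrite Q2, Q3.
      assert (0 <= (k - q2 * u)^2) by apply pow2_ge_0.
      replace ((k - q2 * u)^2) with (k^2 - 2 * q2 * u * k + q2^2 * u^2) in H0 by ring.
      rewrite Q2 in H0. lra. }
  assert (q3 * dist P' A' <= q3 * (dist P' Ab + u)) by (apply Rmult_le_compat_l; lra).
  lra.
Qed.

Lemma par_core L L' P A : valid_line L -> valid_line L' -> ldet L L' = 0 ->
  on_line P L -> on_line A L ->
  d2 P (proj L' P) = d2 A (proj L' A) /\ d2 (proj L' P) (proj L' A) = d2 P A.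
Proof.
  intros HV HV' HD HP HA. pose proof (valid_N L' HV') as HN.
  destruct L as [a b c], L' as [a' b' c'], P as [p1 p2], A as [x1 x2];
    unfold on_line, d2, valid_line, ldet, proj in *; simpl in *.
  set (d1 := p1 - x1); set (e2 := p2 - x2).
  assert (E : a * d1 + b * e2 = 0) by (unfold d1, e2; lra).
  assert (K : a' * d1 + b' * e2 = 0).
  { destruct HV as [Ha|Hb].
    - assert (a * (a' * d1 + b' * e2) = 0).
      { replace (a * (a' * d1 + b' * e2)) with (a' * (a * d1 + b * e2) + e2 * (a * b' - a' * b)) by ring.
        rewrite E, HD; ring. }
      destruct (Rmult_integral _ _ H); [contradiction|auto].
    - assert (b * (a' * d1 + b' * e2) = 0).
      { replace (b * (a' * d1 + b' * e2)) with (b' * (a * d1 + b * e2) - d1 * (a * b' - a' * b)) by ring.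
        rewrite E, HD; ring. }
      destruct (Rmult_integral _ _ H); [contradiction|auto]. }
  replace (a' * p1 + b' * p2) with (a' * x1 + b' * x2) by (unfold d1, e2 in K; lra).
  split; unfold d1, e2; ring.
Qed.

Lemma d2_sym p q : d2 p q = d2 q p.
Proof. unfold d2; ring. Qed.

Lemma proj_aff L' S P A lam : valid_line L' -> on_line S L' ->
  fst A = fst S + lam * (fst P - fst S) -> snd A = snd S + lam * (snd P - snd S) ->
  fst (proj L' A) = fst S + lam * (fst (proj L' P) - fst S) /\
  snd (proj L' A) = snd S + lam * (snd (proj L' P) - snd S).
Proof.
  intros HV HS H1 H2. pose proof (valid_N L' HV) as HN.
  destruct L' as [a b c], S as [s1 s2], P as [p1 p2], A as [x1 x2];
    unfold on_line, proj in *; cbn [fst snd la lb lc] in *. subst x1 x2. rewrite <- HS.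
  split; field; lra.
Qed.

Lemma aff_on L S Q P' mu : on_line S L -> on_line Q L ->
  fst P' = fst S + mu * (fst Q - fst S) -> snd P' = snd S + mu * (snd Q - snd S) ->
  on_line P' L.
Proof.
  intros HS HQ H1 H2. destruct L as [a b c], S as [s1 s2], Q as [q1 q2], P' as [x1 x2];
    unfold on_line in *; cbn [fst snd la lb lc] in *. subst x1 x2.
  transitivity (a * s1 + b * s2 + mu * ((a * q1 + b * q2) - (a * s1 + b * s2))); [ring|].
  rewrite HS, HQ. ring.
Qed.

Lemma nonpar_core L' S P A A' P' lam mu :
  valid_line L' -> on_line S L' -> on_line A' L' ->
  fst A = fst S + lam * (fst P - fst S) -> snd A = snd S + lam * (snd P - snd S) ->
  fst P' = fst S + mu * (fst (proj L' P) - fst S) ->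
  snd P' = snd S + mu * (snd (proj L' P) - snd S) ->
  mu * dist S (proj L' P) =
    dist S (proj L' P) - (dist P (proj L' P) + dist S (proj L' P) - dist S P) / sqrt 2 ->
  dist P P' + sqrt 3 * dist P' A' <= sqrt 3 * dist P A + 3 * dist A A'.
Proof.
  intros HV HS HA' HA1 HA2 HP1 HP2 Hmu.
  apply (red L'); auto.
  destruct (proj_aff L' S P A lam HV HS HA1 HA2) as [HB1 HB2].
  set (Pb := proj L' P) in *. set (Ab := proj L' A) in *.
  assert (HPb : on_line Pb L') by (apply proj_on; auto).
  assert (HP' : on_line P' L') by (eapply aff_on; [exact HS| exact HPb | exact HP1 | exact HP2]).
  set (r := dist S P) in *. set (s := dist S Pb) in *. set (h := dist P Pb) in *.
  set (x := (h + s - r) / sqrt 2) in *.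
  assert (r0 : 0 <= r) by apply pdist_nonneg. assert (s0 : 0 <= s) by apply pdist_nonneg.
  assert (h0 : 0 <= h) by apply pdist_nonneg.
  assert (Er : r ^ 2 = s ^ 2 + h ^ 2).
  { unfold r, s, h. rewrite !pdist_sq. rewrite d2_sym, (pyth L' P S HV HS). fold Pb.
    rewrite (d2_sym Pb S). ring. }
  destruct sqrt2_facts as [Q2 Q2g].
  assert (x0 : 0 <= x).
  { unfold x. apply Rmult_le_pos; [|apply Rlt_le, Rinv_0_lt_compat; lra]. nra. }
  assert (EPA : dist P A = Rabs (1 - lam) * r).
  { apply pdist_of_sq. apply Rmult_le_pos; auto using Rabs_pos.
    rewrite Rpow_mult_distr, pow2_abs. unfold r. rewrite pdist_sq.
    unfold d2. rewrite HA1, HA2. ring. }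
  assert (EAAb : dist A Ab = Rabs lam * h).
  { apply pdist_of_sq. apply Rmult_le_pos; auto using Rabs_pos.
    rewrite Rpow_mult_distr, pow2_abs. unfold h. rewrite pdist_sq.
    unfold d2. rewrite HA1, HA2, HB1, HB2. ring. }
  assert (EP'Ab : dist P' Ab = Rabs (lam * s - (s - x))).
  { apply pdist_of_sq. apply Rabs_pos.
    rewrite pow2_abs. replace (s - x) with (mu * s) by lra.
    replace ((lam * s - mu * s) ^ 2) with ((lam - mu)^2 * s^2) by ring.
    unfold s. rewrite pdist_sq.
    unfold d2. rewrite HP1, HP2, HB1, HB2. ring. }
  assert (EPbP' : dist Pb P' = x).
  { apply pdist_of_sq; auto.
    replace x with (s - mu * s) by lra.
    replace ((s - mu * s) ^ 2) with ((1 - mu)^2 * s^2) by ring.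
    unfold s. rewrite pdist_sq.
    unfold d2. rewrite HP1, HP2. ring. }
  assert (EPP' : dist P P' = sqrt (h^2 + x^2)).
  { rewrite pdist_d2, (pyth L' P P' HV HP'). fold Pb. rewrite <- EPbP'. unfold h.
    rewrite !pdist_sq. reflexivity. }
  rewrite EPA, EAAb, EP'Ab, EPP'.
  pose proof (scalar r s h x lam s0 h0 r0 Er eq_refl) as Sc.
  replace (sqrt 3 * (Rabs (1 - lam) * r)) with (sqrt 3 * Rabs (1 - lam) * r) by ring.
  replace (sqrt 2 * sqrt 3 * (Rabs lam * h)) with (sqrt 2 * sqrt 3 * Rabs lam * h) by ring.
  exact Sc.
Qed.

Lemma d2_zero p q : d2 p q = 0 -> p = q.
Proof.
  intros H. destruct p as [p1 p2], q as [q1 q2]; unfold d2 in H; cbn [fst snd] in *.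
  pose proof (pow2_ge_0 (p1 - q1)); pose proof (pow2_ge_0 (p2 - q2)).
  assert (p1 = q1) by nra. assert (p2 = q2) by nra. subst; reflexivity.
Qed.

Lemma dist_self p : dist p p = 0.
Proof. apply pdist_of_sq; [lra|]. unfold d2; ring. Qed.

Lemma step L L' P A A' : valid_line L -> valid_line L' -> on_line P L -> on_line A L -> on_line A' L' ->
  on_line (drift_step L P L') L' /\
  dist P (drift_step L P L') + sqrt 3 * dist (drift_step L P L') A' <= sqrt 3 * dist P A + 3 * dist A A'.
Proof.
  intros HV HV' HP HA HA'.
  destruct sqrt2_facts as [Q2 Q2g]. destruct sqrt3_facts as [Q3 Q3g].
  unfold drift_step. cbv zeta.
  destruct (Req_EM_T (ldet L L') 0) as [Hd|Hd].
  - split; [apply proj_on; auto|].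
    apply (red L'); auto.
    destruct (par_core L L' P A HV HV' Hd HP HA) as [E1 E2].
    rewrite !pdist_d2, E1, E2, <- !pdist_d2.
    pose proof (pdist_nonneg A (proj L' A)).
    assert (1 <= sqrt 2 * sqrt 3) by nra. nra.
  - destruct (inter_on L L' Hd) as [HSL HSL'].
    set (S := inter L L') in *. set (Pb := proj L' P).
    assert (HPb : on_line Pb L') by (apply proj_on; auto).
    assert (Py : d2 P S = d2 P Pb + d2 Pb S) by (apply pyth; auto).
    destruct (Req_EM_T (dist S Pb) 0) as [Hs|Hs].
    + split; [exact HSL'|].
      destruct (Req_EM_T (d2 P S) 0) as [HPS|HPS].
      * apply d2_zero in HPS. subst P. rewrite dist_self.
        pose proof (pdist_tri S A A'). assert (sqrt 3 <= 3) by nra.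
        pose proof (pdist_nonneg A A').
        assert (sqrt 3 * dist S A' <= sqrt 3 * (dist S A + dist A A')) by (apply Rmult_le_compat_l; lra).
        nra.
      * destruct (lam_repr L S P A HV HSL HP HA HPS) as [lam [H1 H2]].
        apply (nonpar_core L' S P A A' S lam 0); auto; try (cbn [fst snd]; ring).
        fold Pb. rewrite Hs.
        assert (d2 Pb S = 0).
        { rewrite d2_sym, <- pdist_sq, Hs. ring. }
        assert (dist S P = dist P Pb) by (rewrite !pdist_d2, d2_sym, Py, H; f_equal; ring).
        rewrite H0. unfold Rdiv. ring.
    + assert (HPS : d2 P S <> 0).
      { intro Z. apply Hs. apply pdist_of_sq; [lra|].
        rewrite d2_sym. pose proof (d2_nonneg P Pb). pose proof (d2_nonneg Pb S). nra. }
      destruct (lam_repr L S P A HV HSL HP HA HPS) as [lam [H1 H2]].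
      set (mu := (dist S Pb - (dist P Pb + dist S Pb - dist S P) / sqrt 2) / dist S Pb).
      assert (Hmu : mu * dist S Pb = dist S Pb - (dist P Pb + dist S Pb - dist S P) / sqrt 2)
        by (unfold mu; field; split; [apply Rgt_not_eq; lra | exact Hs]).
      split.
      * eapply aff_on; [exact HSL' | exact HPb | cbn [fst snd]; reflexivity | cbn [fst snd]; reflexivity].
      * apply (nonpar_core L' S P A A' _ lam mu); auto.
Qed.

Theorem mainTheorem1 :
  forall (P0 : point) (L0 : line) (X : nat -> line) (m : nat),
    valid_line L0 -> on_line P0 L0 ->
    (forall t, (1 <= t <= m)%nat -> valid_line (X t)) ->
    forall A : nat -> point,
      A 0%nat = P0 ->
      (forall t, (1 <= t <= m)%nat -> on_line (A t) (X t)) ->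
      path_cost (drift_pos L0 P0 X) m <= 3 * path_cost A m.
Proof.
  intros P0 L0 X m HV0 HP0 HVX A HA0 HAX.
  assert (Inv : forall n, (n <= m)%nat ->
    valid_line (fst (drift_state L0 P0 X n)) /\
    on_line (drift_pos L0 P0 X n) (fst (drift_state L0 P0 X n)) /\
    on_line (A n) (fst (drift_state L0 P0 X n)) /\
    path_cost (drift_pos L0 P0 X) n + sqrt 3 * dist (drift_pos L0 P0 X n) (A n)
      <= 3 * path_cost A n).
  { induction n as [|n IH]; intros Hn.
    - unfold drift_pos; cbn [drift_state fst snd path_cost]. rewrite HA0.
      repeat split; auto. rewrite dist_self. lra.
    - destruct (IH ltac:(lia)) as [V [OP [OA C]]].
      assert (HV' : valid_line (X (S n))) by (apply HVX; lia).
      assert (HA' : on_line (A (S n)) (X (S n))) by (apply HAX; lia).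
      destruct (step _ _ _ _ _ V HV' OP OA HA') as [On Ineq].
      unfold drift_pos in *. cbn [drift_state fst snd path_cost] in *.
      repeat split; auto.
      lra. }
  destruct (Inv m (le_n m)) as [_ [_ [_ C]]].
  pose proof (pdist_nonneg (drift_pos L0 P0 X m) (A m)).
  assert (0 <= sqrt 3) by apply sqrt_pos.
  nra.
Qed.
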